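(* Let $\{\mathcal T^+,\mathcal T^-\}$ be a closed orientation of a medium with $n$ states. Then for any state $S$, at most $\log_2 n$ tokens in $\mathcal T^+$ are effective for $S$.
   Context: A medium consists of a finite set of states and a set $\mathcal T$ of tokens, each token $t$ acting as a function on states, written $S\mapsto St$. Tokens concatenate into messages (words); $Sw$ denotes the state obtained by applying the tokens of $w$ successively to $S$. A token $t$ has a reverse $\tilde t$ if for any two distinct states $S\neq Q$, $St=Q$ iff $Q\tilde t=S$. A message is inconsistent if it contains some token together with its reverse, and consistent otherwise. A message $w$ is vacuous if for each token $t$ it contains equally many copies of $t$ and $\tilde t$. A token $t$ is effective for $S$ if $St\neq S$; a message is stepwise effective for $S$ if each successive token is effective for the state it is applied to. The axioms of a medium are: (1) each token has a unique reverse; (2) for any two distinct states $S,Q$ there is a consistent message $w$ with $Sw=Q$; (3) if $w$ is stepwise effective for $S$, then $Sw=S$ iff $w$ is vacuous; (4) if $Sw=Qz$, $w$ is stepwise effective for $S$, $z$ is stepwise effective for $Q$, and both $w,z$ are consistent, then $wz$ is consistent. An orientation is a partition $\{\mathcal T^+,\mathcal T^-\}$ of $\mathcal T$ such that for each token $t$ exactly one of $t,\tilde t$ lies in $\mathcal T^+$ (the positive tokens). An orientation is closed if whenever two positive tokens $t,t'$ are both effective for a state $S$, the messages $tt'$ and $t't$ are stepwise effective for $S$. *)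

(* Defs.v *)
From mathcomp Require Import all_boot.
Set Implicit Arguments. Unset Strict Implicit. Unset Printing Implicit Defensive.

Section Media.
Variables (St Tok : finType) (act : St -> Tok -> St).

Definition apply_msg (S : St) (w : seq Tok) : St := foldl act S w.

Definition is_reverse (t t' : Tok) : Prop :=
  forall S Q : St, S <> Q -> (act S t = Q <-> act Q t' = S).

Definition inconsistent (w : seq Tok) : Prop :=
  exists t t', is_reverse t t' /\ t \in w /\ t' \in w.
Definition consistent (w : seq Tok) : Prop := ~ inconsistent w.

Definition vacuous (w : seq Tok) : Prop :=
  forall t t', is_reverse t t' -> count_mem t w = count_mem t' w.

Definition effective (S : St) (t : Tok) : bool := act S t != S.

Fixpoint stepwise_effective (S : St) (w : seq Tok) : bool :=
  match w with
  | [::] => true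
  | t :: w' => effective S t && stepwise_effective (act S t) w'
  end.

Definition is_medium : Prop :=
  [/\ (forall t, exists! t', is_reverse t t'),
      (forall S Q, S <> Q -> exists w, consistent w /\ apply_msg S w = Q),
      (forall S w, stepwise_effective S w -> (apply_msg S w = S <-> vacuous w))
    & (forall S Q w z, apply_msg S w = apply_msg Q z ->
         stepwise_effective S w -> stepwise_effective Q z ->
         consistent w -> consistent z -> consistent (w ++ z))].

(* pos = T^+ ; exactly one of t, reverse(t) is positive *)
Definition orientation (pos : pred Tok) : Prop :=
  forall t t', is_reverse t t' -> (pos t <-> ~~ pos t').

Definition closed_orientation (pos : pred Tok) : Prop :=
  orientation pos /\
  forall S t t', t != t' -> pos t -> pos t' -> effective S t -> effective S t' ->
    stepwise_effective S [:: t; t'] /\ stepwise_effective S [:: t'; t].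

End Media.

(* Main.v *)
Require Import Defs.
From mathcomp Require Import all_boot.

Set Implicit Arguments. Unset Strict Implicit.
Section Aux.
Variables (St Tok : finType) (act : St -> Tok -> St).

Lemma rev_sym t t' : is_reverse act t t' -> is_reverse act t' t.
Proof. move=> H S Q hSQ; have := H Q S (nesym hSQ); tauto. Qed.

Lemma se_cat S w z : stepwise_effective act S (w ++ z) =
  stepwise_effective act S w && stepwise_effective act (apply_msg act S w) z.
Proof. elim: w S => [|t w IH] S //=; by rewrite IH andbA. Qed.

Lemma reversal (hrev : forall t, exists t', is_reverse act t t') z : forall S,
  stepwise_effective act S z -> exists rz,
  [/\ stepwise_effective act (apply_msg act S z) rz,
      apply_msg act (apply_msg act S z) rz = S &
      forall x, x \in rz -> exists2 b, b \in z & is_reverse act b x].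
Proof.
elim: z => [|t z IH] S /=.
  by move=> _; exists [::]; split.
case/andP=> eff se.
have [rz [h1 h2 h3]] := IH _ se.
have [t' rt] := hrev t.
have hS : S <> act S t by move=> E; move: eff; rewrite /effective -E eqxx.
have back : act (act S t) t' = S by apply/(rt S (act S t) hS).
exists (rz ++ [:: t']); split.
- rewrite se_cat h1 /= andbT /effective.
  move: h2; rewrite /apply_msg /= => ->; rewrite back; exact/eqP.
- by move: h2; rewrite /apply_msg foldl_cat /= => ->; rewrite back.
- move=> x; rewrite mem_cat => /orP[/h3 [b bz rb]|].
    by exists b => //; rewrite inE bz orbT.
  by rewrite inE => /eqP ->; exists t => //; rewrite inE eqxx.
Qed.

Variable pos : pred Tok.
Hypothesis cl : closed_orientation act pos.

Definition good S t := pos t && effective act S t.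

Lemma good_se w : forall S, uniq w -> all (good S) w -> stepwise_effective act S w.
Proof.
elim: w => [|t w IH] S //= /andP[tw uw] /andP[/andP[pt et] aw].
rewrite et /=; apply: IH => //.
apply/allP => t' t'w.
have /andP[pt' et'] := allP aw t' t'w.
have ne : t != t' by apply/eqP => E; rewrite E t'w in tw.
have [/andP[_ /andP[h _]] _] := cl.2 S t t' ne pt pt' et et'.
by rewrite /good pt' h.
Qed.

End Aux.

Theorem mainTheorem6 (St Tok : finType) (act : St -> Tok -> St) (pos : pred Tok) :
  is_medium act -> closed_orientation act pos ->
  forall S : St, 2 ^ #|[pred t | pos t && effective act S t]| <= #|St|.
Proof.
move=> [ax1 _ ax3 _] cl S.
have hrev : forall t, exists t', is_reverse act t t'.
  by move=> t; have [t' [h _]] := ax1 t; exists t'.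
set E := [set t | pos t && effective act S t].
have gE : forall A : {set Tok}, A \subset E -> all (good act pos S) (enum A).
  move=> A sAE; apply/allP => x; rewrite mem_enum => xA.
  by have := subsetP sAE x xA; rewrite inE.
have key : forall A B : {set Tok}, A \subset E -> B \subset E -> forall t,
    t \in A -> t \notin B ->
    apply_msg act S (enum A) <> apply_msg act S (enum B).
  move=> A B sA sB t tA tB eq.
  have seA := good_se cl (enum_uniq A) (gE A sA).
  have seB := good_se cl (enum_uniq B) (gE B sB).
  have [rz [h1 h2 h3]] := reversal hrev seB.
  have se : stepwise_effective act S (enum A ++ rz).
  rewrite se_cat seA /=.
    exact: (eq_ind_r (fun X => stepwise_effective act X rz) h1 eq).
  have ap : apply_msg act S (enum A ++ rz) = S.
    rewrite /apply_msg foldl_cat -/(apply_msg act S (enum A)).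
    exact: (eq_ind_r (fun X => apply_msg act X rz = S) h2 eq).
  have vac := (ax3 S _ se).1 ap.
  have [t' rt] := hrev t.
  have pt : pos t by have := subsetP sA t tA; rewrite inE => /andP[].
  have npt' : ~~ pos t' by apply/(cl.1 t t' rt).
  have := vac t t' rt.
  have -> : count_mem t' (enum A ++ rz) = 0.
    apply/count_memPn; rewrite mem_cat negb_or; apply/andP; split.
      apply/negP; rewrite mem_enum => t'A.
      by have := subsetP sA t' t'A; rewrite inE (negbTE npt').
    apply/negP => /h3 [b bB rb].
    have [y [_ uy]] := ax1 t'.
    have e1 := uy _ (rev_sym rb); have e2 := uy _ (rev_sym rt).
    by move: bB; rewrite mem_enum -e1 e2 (negbTE tB).
  have : 0 < count_mem t (enum A ++ rz).
    by rewrite -has_count has_pred1 mem_cat mem_enum tA.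
  by move=> h e; rewrite e in h.
pose f := fun A : {set Tok} => apply_msg act S (enum A).
have inj : {in powerset E &, injective f}.
  move=> A B; rewrite !inE => sA sB eqf; apply/setP => x.
  case xA: (x \in A); case xB: (x \in B) => //.
    exfalso; apply: (key A B sA sB x _ _ eqf); by rewrite ?xA ?xB.
    exfalso; apply: (key B A sB sA x _ _ (esym eqf)); by rewrite ?xA ?xB.
have -> : #|[pred t | pos t && effective act S t]| = #|E|.
  by apply: eq_card => x; rewrite !inE.
by have := max_card [set f x | x in powerset E]; rewrite (card_in_imset inj) card_powerset.
Qed.
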